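(* Let $A,B,C\in\operatorname{Sym}(n,\mathbb{R})$, where $A,B$ are linearly independent, form a non-dissipative pair, and satisfy $\operatorname{maxrank}\{A,B\}\ge17$, and where $Q_C$ vanishes on $\{Q_A=0\}\cap\{Q_B=0\}$. Assume that at least one connected component of $\mathcal{N}$ spans $\mathbb{R}^n$. Then $C$ is a linear combination of $A$ and $B$.
   Context: $Q_M(z)={}^tzMz$. Non-dissipative pair: $0$ is the only positive semidefinite element of $\operatorname{span}_{\mathbb{R}}\{A,B\}$; $\operatorname{maxrank}\{A,B\}$ is the maximal rank of elements of this span. $\mathcal{N}:=\{z\in\mathbb{R}^n:Q_A(z)=Q_B(z)=0,\ Az\text{ and }Bz\text{ linearly independent}\}$; a connected component spans $\mathbb{R}^n$ if its linear span is $\mathbb{R}^n$. No symplectic structure is assumed. *)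

(* Defs.v *)
From HB Require Import structures.
From mathcomp Require Import all_boot all_order all_algebra.
From mathcomp Require Import all_classical all_reals all_analysis.
Set Implicit Arguments. Unset Strict Implicit. Unset Printing Implicit Defensive.
Import Order.TTheory GRing.Theory Num.Theory.
Import numFieldNormedType.Exports.
Local Open Scope classical_set_scope.
Local Open Scope ring_scope.

Definition symmetric_mx (R : realType) (n : nat) (A : 'M[R]_n) : Prop := A^T = A.

Definition Q (R : realType) (n : nat) (M : 'M[R]_n) (z : 'cV[R]_n) : R :=
  (z^T *m M *m z) 0 0.

Definition psd_mx (R : realType) (n : nat) (M : 'M[R]_n) : Prop :=
  forall z : 'cV[R]_n, 0 <= Q M z.

Definition lin_indep2 (R : realType) (V : lmodType R) (u v : V) : Prop :=
  forall a b : R, a *: u + b *: v = 0 -> a = 0 /\ b = 0.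

Definition non_dissipative (R : realType) (n : nat) (A B : 'M[R]_n) : Prop :=
  forall a b : R, psd_mx (a *: A + b *: B) -> a *: A + b *: B = 0.

Definition maxrank_ge (R : realType) (n : nat) (A B : 'M[R]_n) (k : nat) : Prop :=
  exists a b : R, (k <= \rank (a *: A + b *: B))%N.

Definition Nset (R : realType) (n : nat) (A B : 'M[R]_n) : set 'cV[R]_n :=
  [set z | Q A z = 0 /\ Q B z = 0 /\ lin_indep2 (A *m z) (B *m z)].

Definition spans_all (R : realType) (n : nat) (S : set 'cV[R]_n) : Prop :=
  forall v : 'cV[R]_n, exists (m : nat) (c : 'I_m -> R) (w : 'I_m -> 'cV[R]_n),
    (forall i, S (w i)) /\ v = \sum_(i < m) c i *: w i.

(* Main.v *)
Require Import Defs.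
From HB Require Import structures.
From mathcomp Require Import all_boot all_order all_algebra.
From mathcomp Require Import all_classical all_reals all_analysis.
From mathcomp Require Import polyrcf.
From mathcomp Require Import ring lra zify.
Import Order.TTheory GRing.Theory Num.Theory.
Import numFieldNormedType.Exports.
Local Open Scope classical_set_scope.
Local Open Scope ring_scope.
Set Implicit Arguments. Unset Strict Implicit. Unset Printing Implicit Defensive.
Section Bil.
Variable R : realType.
Variable n : nat.
Implicit Types (M N : 'M[R]_n) (u w x y : 'cV[R]_n).

Definition bl M u w : R := (u^T *m M *m w) 0 0.

Lemma QE M z : Q M z = bl M z z. Proof. by []. Qed.

Lemma blDl M u u' w : bl M (u + u') w = bl M u w + bl M u' w.
Proof. by rewrite /bl linearD !mulmxDl mxE. Qed.
Lemma blDr M u w w' : bl M u (w + w') = bl M u w + bl M u w'.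
Proof. by rewrite /bl mulmxDr mxE. Qed.
Lemma blZl M c u w : bl M (c *: u) w = c * bl M u w.
Proof. by rewrite /bl linearZ -!scalemxAl mxE. Qed.
Lemma blZr M c u w : bl M u (c *: w) = c * bl M u w.
Proof. by rewrite /bl -scalemxAr mxE. Qed.
Lemma blDm M N u w : bl (M + N) u w = bl M u w + bl N u w.
Proof. by rewrite /bl mulmxDr mulmxDl mxE. Qed.
Lemma blZm M c u w : bl (c *: M) u w = c * bl M u w.
Proof. by rewrite /bl -scalemxAr -scalemxAl mxE. Qed.
Lemma blNm M u w : bl (- M) u w = - bl M u w.
Proof. by rewrite -scaleN1r blZm mulN1r. Qed.
Lemma blBm M N u w : bl (M - N) u w = bl M u w - bl N u w.
Proof. by rewrite blDm blNm. Qed.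
Lemma blNl M u w : bl M (- u) w = - bl M u w.
Proof. by rewrite -scaleN1r blZl mulN1r. Qed.
Lemma blNr M u w : bl M u (- w) = - bl M u w.
Proof. by rewrite -scaleN1r blZr mulN1r. Qed.
Lemma blBl M u u' w : bl M (u - u') w = bl M u w - bl M u' w.
Proof. by rewrite blDl blNl. Qed.
Lemma blBr M u w w' : bl M u (w - w') = bl M u w - bl M u w'.
Proof. by rewrite blDr blNr. Qed.
Lemma bl0l M w : bl M 0 w = 0.
Proof. by rewrite /bl trmx0 !mul0mx mxE. Qed.
Lemma bl0r M w : bl M w 0 = 0.
Proof. by rewrite /bl mulmx0 mxE. Qed.
Lemma bl_sym M u w : M^T = M -> bl M u w = bl M w u.
Proof.
move=> sM; rewrite /bl.
transitivity ((u^T *m M *m w)^T 0 0); first by rewrite [RHS]mxE.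
by rewrite !trmx_mul trmxK sM mulmxA.
Qed.

End Bil.

Section Proj.
Variable R : realType.
Variable n : nat.
Implicit Types (M N : 'M[R]_n) (u w x y z : 'cV[R]_n).

Lemma bl_comb M a b u w : M^T = M ->
  bl M (a *: u + b *: w) (a *: u + b *: w) =
  a ^+ 2 * bl M u u + 2 * a * b * bl M u w + b ^+ 2 * bl M w w.
Proof.
move=> sM; rewrite !blDl !blDr !blZl !blZr (bl_sym u w sM); ring.
Qed.

Lemma proj_lemma A B C z :
  A^T = A -> B^T = B -> C^T = C ->
  (forall y, Q A y = 0 -> Q B y = 0 -> Q C y = 0) ->
  bl A z z = 0 -> bl B z z = 0 -> forall w,
  bl A z w * bl B w w = bl B z w * bl A w w -> bl A z w != 0 ->
  bl A z w * bl C w w = bl C z w * bl A w w.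
Proof.
move=> sA sB sC HQ zA zB w hw aw.
have zC : bl C z z = 0 by apply: HQ.
pose y := bl A w w *: z + (- (2 * bl A z w)) *: w.
have yA : Q A y = 0 by rewrite QE bl_comb // zA; ring.
have yB : Q B y = 0.
  rewrite QE bl_comb // zB.
  transitivity (4 * bl A z w * (bl A z w * bl B w w - bl B z w * bl A w w)); first ring.
  by rewrite hw subrr mulr0.
have := HQ y yA yB; rewrite QE bl_comb // zC => h.
have : 4 * bl A z w * (bl A z w * bl C w w - bl C z w * bl A w w) = 0.
  by rewrite -h; ring.
move/eqP; rewrite !mulf_eq0 (negbTE aw) orbF => /orP[|]; first by rewrite pnatr_eq0.
by rewrite subr_eq0 => /eqP.
Qed.

End Proj.

Section Est.
Variable R : realType.

Lemma nD (a b A B : R) : `|a| <= A -> `|b| <= B -> `|a + b| <= A + B.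
Proof. by move=> ha hb; apply: le_trans (ler_normD _ _) (lerD ha hb). Qed.
Lemma nB (a b A B : R) : `|a| <= A -> `|b| <= B -> `|a - b| <= A + B.
Proof. by move=> ha hb; apply: nD => //; rewrite normrN. Qed.
Lemma nM (a b A B : R) : `|a| <= A -> `|b| <= B -> `|a * b| <= A * B.
Proof. by move=> ha hb; rewrite normrM ler_pM. Qed.
Lemma nX2 (a A : R) : `|a| <= A -> `|a ^+ 2| <= A ^+ 2.
Proof. by move=> ha; rewrite expr2 expr2; apply: nM. Qed.
Lemma nN (a A : R) : `|a| <= A -> `|- a| <= A.
Proof. by rewrite normrN. Qed.
Lemma n2 : `|2 : R| <= 2.
Proof. by rewrite ger0_norm. Qed.
Lemma n1 : `|1 : R| <= 1.
Proof. by rewrite normr1. Qed.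
Lemma nrefl (a : R) : `|a| <= `|a|.
Proof. exact: lexx. Qed.

Lemma small_zero (c K m0 : R) : 0 < m0 ->
  (forall m, 0 < m -> m <= m0 -> `|c| <= m * K) -> c = 0.
Proof.
move=> m0p H; apply/eqP; apply: contraT => cn0.
have cp : 0 < `|c| by rewrite normr_gt0.
have K0 : 0 < K.
  have := H m0 m0p (lexx _) => h.
  by rewrite -(pmulr_rgt0 _ m0p); apply: lt_le_trans h.
pose m := Num.min m0 (`|c| / (2 * K)).
have mp : 0 < m by rewrite lt_min m0p divr_gt0 // mulr_gt0.
have mle : m <= m0 by rewrite ge_min lexx.
have := H m mp mle.
have : m * K <= `|c| / 2.
  have : m <= `|c| / (2 * K) by rewrite ge_min lexx orbT.
  rewrite ler_pdivlMr ?mulr_gt0 // => h.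
  rewrite ler_pdivlMr //; apply: le_trans h; rewrite le_eqVlt; apply/orP; left.
  by apply/eqP; ring.
move=> h1 h2; have := le_trans h2 h1; rewrite ler_pdivlMr // => h3.
lra.
Qed.
End Est.

Ltac bnd := repeat first
  [ apply: n2 | apply: n1 | apply: nD | apply: nB | apply: nM | apply: nX2 | apply: nN | apply: n2
  | apply: nrefl | assumption ].

Section Expand.
Variable R : realType.
Variable n : nat.
Lemma expand (X : 'M[R]_n) v p q (m l : R) : X^T = X ->
  bl X (v + m *: (p + l *: q)) (v + m *: (p + l *: q)) =
  bl X v v + m * (2 * (bl X v p + l * bl X v q) +
     m * (bl X p p + 2 * l * bl X p q + l ^+ 2 * bl X q q)).
Proof.
move=> sX; rewrite !blDl !blDr !blZl !blZr !blDl !blDr !blZl !blZr.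
rewrite (bl_sym p v sX) (bl_sym q v sX) (bl_sym q p sX); ring.
Qed.
End Expand.

Section Root.
Variable R : realType.
Definition Sfun (xvp xvq xpp xpq xqq m l : R) :=
  2 * (xvp + l * xvq) + m * (xpp + 2 * l * xpq + l ^+ 2 * xqq).

Lemma root_ex (a0 b0 avp avq app apq aqq bvp bvq bpp bpq bqq m : R) :
  a0 != 0 ->
  `|m * (Sfun bvp bvq bpp bpq bqq m (b0 / a0 - 1) -
         (b0 / a0 - 1) * Sfun avp avq app apq aqq m (b0 / a0 - 1))| < `|a0| ->
  `|m * (Sfun bvp bvq bpp bpq bqq m (b0 / a0 + 1) -
         (b0 / a0 + 1) * Sfun avp avq app apq aqq m (b0 / a0 + 1))| < `|a0| ->
  exists l, b0 / a0 - 1 <= l <= b0 / a0 + 1 /\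
    (b0 + m * Sfun bvp bvq bpp bpq bqq m l) -
      l * (a0 + m * Sfun avp avq app apq aqq m l) = 0.
Proof.
move=> a0n0.
set ls := b0 / a0.
set P := fun l => (b0 + m * Sfun bvp bvq bpp bpq bqq m l) -
      l * (a0 + m * Sfun avp avq app apq aqq m l).
have lsa : ls * a0 = b0 by rewrite /ls mulfVK.
set e1 := m * (Sfun bvp bvq bpp bpq bqq m (ls - 1) -
         (ls - 1) * Sfun avp avq app apq aqq m (ls - 1)).
set e2 := m * (Sfun bvp bvq bpp bpq bqq m (ls + 1) -
         (ls + 1) * Sfun avp avq app apq aqq m (ls + 1)).
move=> h1 h2.
have P1 : P (ls - 1) = a0 + e1.
  rewrite /P /e1 -lsa; ring.
have P2 : P (ls + 1) = - a0 + e2.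
  rewrite /P /e2 -lsa; ring.
have [pol Hpol] : exists pol : {poly R}, forall l, pol.[l] = P l.
  exists ((b0 + m * (2 * bvp + m * bpp))%:P
 + (m * (2 * bvq + 2 * m * bpq) - a0 - m * (2 * avp + m * app))%:P * 'X
 + (m * m * bqq - m * (2 * avq + 2 * m * apq))%:P * 'X^2 + (- (m * m * aqq))%:P * 'X^3).
  by move=> l; rewrite !(hornerD, hornerM, hornerC, hornerX, hornerXn, hornerN) /P /Sfun; ring.
have le12 : ls - 1 <= ls + 1 by lra.
have [a0p|a0n] := ltP 0 a0.
- have ha : `|a0| = a0 by rewrite ger0_norm // ltW.
  rewrite ha in h1 h2.
  have [l /andP[l1 l2] rl] : exists2 l, ls - 1 <= l <= ls + 1 & root (- pol) l.
    apply: poly_ivt => //; rewrite !hornerN !Hpol P1 P2.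
    move: h1 h2; rewrite !ltr_norml => /andP[? ?] /andP[? ?].
    apply/andP; split; lra.
  exists l; split; first by rewrite l1 l2.
  by move: rl; rewrite /root hornerN oppr_eq0 Hpol => /eqP.
- have ha : `|a0| = - a0 by rewrite ler0_norm.
  rewrite ha in h1 h2.
  have [l /andP[l1 l2] rl] : exists2 l, ls - 1 <= l <= ls + 1 & root pol l.
    apply: poly_ivt => //; rewrite !Hpol P1 P2.
    move: h1 h2; rewrite !ltr_norml => /andP[? ?] /andP[? ?].
    apply/andP; split; lra.
  exists l; split; first by rewrite l1 l2.
  by move: rl; rewrite /root Hpol => /eqP.
Qed.
End Root.

Lemma Sbound (R : realType) (xvp xvq xpp xpq xqq m l L : R) :
  `|l| <= L -> `|m| <= 1 ->
  `|Sfun xvp xvq xpp xpq xqq m l| <=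
   2 * (`|xvp| + L * `|xvq|) + 1 * (`|xpp| + 2 * L * `|xpq| + L ^+ 2 * `|xqq|).
Proof. by move=> hl hm; rewrite /Sfun; bnd. Qed.

Section Key.
Variable R : realType.
Variable n : nat.
Implicit Types (A B C : 'M[R]_n) (z p q v w : 'cV[R]_n).

Definition SX (X : 'M[R]_n) v p q m l :=
  Sfun (bl X v p) (bl X v q) (bl X p p) (bl X p q) (bl X q q) m l.
Definition MX (X : 'M[R]_n) v p q (L : R) :=
  2 * (`|bl X v p| + L * `|bl X v q|) +
  1 * (`|bl X p p| + 2 * L * `|bl X p q| + L ^+ 2 * `|bl X q q|).

Lemma SX_bound X v p q m l L : `|l| <= L -> `|m| <= 1 -> `|SX X v p q m l| <= MX X v p q L.
Proof. exact: Sbound. Qed.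

Lemma expandS X v p q m l : X^T = X ->
  bl X (v + m *: (p + l *: q)) (v + m *: (p + l *: q)) = bl X v v + m * SX X v p q m l.
Proof. by move=> sX; rewrite (expand _ _ _ _ _ sX) /SX /Sfun. Qed.

Lemma lin_w X z v p q m l :
  bl X z (v + m *: (p + l *: q)) = bl X z v + m * (bl X z p + l * bl X z q).
Proof. by rewrite !(blDr, blZr). Qed.
End Key.

Lemma MX_ge0 (R : realType) n (X : 'M[R]_n) v p q L : 0 <= L -> 0 <= MX X v p q L.
Proof.
by move=> L0; rewrite /MX !(addr_ge0, mulr_ge0, exprn_ge0) ?ler0n ?ler01.
Qed.

Section Key2.
Variable R : realType.
Variable n : nat.
Implicit Types (A B C : 'M[R]_n) (z p q v w : 'cV[R]_n).

Lemma local_pack A B C z p q v :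
  A^T = A -> B^T = B -> C^T = C ->
  (forall y, Q A y = 0 -> Q B y = 0 -> Q C y = 0) ->
  bl A z z = 0 -> bl B z z = 0 ->
  bl A z p = 1 -> bl B z p = 0 -> bl A z q = 0 -> bl B z q = 1 ->
  bl A z v = 0 -> bl B z v = 0 -> bl A v v != 0 ->
  let a0 := bl A v v in let b0 := bl B v v in
  let L := `|b0 / a0| + 1 in
  exists2 m0 : R, (0 < m0) && (m0 <= 1) & forall m, 0 < m -> m <= m0 ->
  exists l, `|l| <= L /\
    b0 + m * SX B v p q m l = l * (a0 + m * SX A v p q m l) /\
    m * (bl C v v + m * SX C v p q m l) =
      (bl C z v + m * (bl C z p + l * bl C z q)) * (a0 + m * SX A v p q m l).
Proof.
move=> sA sB sC HQ zA zB pA pB qA qB vA vB a0n a0 b0 L.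
pose M1 := MX B v p q L + L * MX A v p q L.
have L0 : 0 <= L by rewrite /L addr_ge0.
have M1ge : 0 <= M1 by rewrite /M1 addr_ge0 ?mulr_ge0 ?MX_ge0.
have a0p : 0 < `|a0| by rewrite normr_gt0.
exists (Num.min 1 (`|a0| / (M1 + 1))).
  by rewrite lt_min ltr01 divr_gt0 ?ltr_pwDr //= ge_min lexx.
move=> m m0 mle.
have m1 : m <= 1 by move: mle; rewrite le_min => /andP[].
have hm : `|m| <= 1 by rewrite ger0_norm // ltW.
have m2 : m * M1 < `|a0|.
  have : m <= `|a0| / (M1 + 1) by move: mle; rewrite le_min => /andP[].
  rewrite ler_pdivlMr ?ltr_pwDr // => h.
  by apply: lt_le_trans h; rewrite ltr_pM2l // ltrDl ltr01.
have bnd1 : forall l, `|l| <= L ->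
    `|m * (SX B v p q m l - l * SX A v p q m l)| < `|a0|.
  move=> l hl; apply: (@le_lt_trans _ _ (m * M1)) => //; rewrite normrM (ger0_norm (ltW m0)).
  apply: ler_wpM2l; first exact: ltW.
  rewrite /M1; apply: nB; first exact: SX_bound.
  by rewrite normrM; apply: ler_pM => //; apply: SX_bound.
have hL1 : `|b0 / a0 - 1| <= L by rewrite /L; apply: nB => //; rewrite normr1.
have hL2 : `|b0 / a0 + 1| <= L by rewrite /L; apply: nD => //; rewrite normr1.
have [l [/andP[l1 l2] Hl]] := @root_ex R a0 b0 (bl A v p) (bl A v q) (bl A p p) (bl A p q) (bl A q q)
   (bl B v p) (bl B v q) (bl B p p) (bl B p q) (bl B q q) m a0n (bnd1 _ hL1) (bnd1 _ hL2).
have lL : `|l| <= L.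
  rewrite /L; have -> : l = (l - b0 / a0) + b0 / a0 by ring.
  rewrite addrC; apply: nD => //; rewrite ler_norml; apply/andP; split; lra.
exists l; split => //.
have H : b0 + m * SX B v p q m l = l * (a0 + m * SX A v p q m l).
  by apply/eqP; rewrite -subr_eq0; apply/eqP; exact: Hl.
split => //.
pose w := v + m *: (p + l *: q).
have wA : bl A z w = m by rewrite /w lin_w pA qA vA; ring.
have wB : bl B z w = m * l by rewrite /w lin_w pB qB vB; ring.
have := proj_lemma sA sB sC HQ zA zB (w := w).
rewrite wA wB /w !expandS // lin_w => -> //.
- by rewrite -mulrA; congr (_ * _); exact: H.
- by rewrite gt_eqF.
Qed.

Lemma local_key A B C z p q v :
  A^T = A -> B^T = B -> C^T = C ->
  (forall y, Q A y = 0 -> Q B y = 0 -> Q C y = 0) ->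
  bl A z z = 0 -> bl B z z = 0 ->
  bl A z p = 1 -> bl B z p = 0 -> bl A z q = 0 -> bl B z q = 1 ->
  bl A z v = 0 -> bl B z v = 0 -> bl A v v != 0 ->
  bl C z v = 0 /\ bl C v v = bl C z p * bl A v v + bl C z q * bl B v v.
Proof.
move=> sA sB sC HQ zA zB pA pB qA qB vA vB a0n.
have [m0 /andP[m0p m01] Hp] := local_pack sA sB sC HQ zA zB pA pB qA qB vA vB a0n.
set L := `|bl B v v / bl A v v| + 1 in Hp.
have L0 : 0 <= L by rewrite /L addr_ge0.
set MA := MX A v p q L; set MB := MX B v p q L; set MC := MX C v p q L.
have gv0 : bl C z v = 0.
  suff : bl C z v * bl A v v = 0.
    by move/eqP; rewrite mulf_eq0 (negbTE a0n) orbF => /eqP.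
  apply: (@small_zero _ _
    ((`|bl C v v| + 1 * MC) + (`|bl C z p| + L * `|bl C z q|) * (`|bl A v v| + 1 * MA)
       + `|bl C z v| * MA) _ m0p) => m mp mle.
  have [l [hl [H E2]]] := Hp m mp mle.
  have hm : `|m| <= 1.
    by rewrite ger0_norm ?(ltW mp) //; apply: le_trans mle _.
  have hSA : `|SX A v p q m l| <= MA by exact: SX_bound.
  have hSC : `|SX C v p q m l| <= MC by exact: SX_bound.
  have -> : bl C z v * bl A v v = m * ((bl C v v + m * SX C v p q m l)
      - (bl C z p + l * bl C z q) * (bl A v v + m * SX A v p q m l)
      - bl C z v * SX A v p q m l).
    have e : (bl C z v + m * (bl C z p + l * bl C z q)) * (bl A v v + m * SX A v p q m l)
      - m * (bl C z p + l * bl C z q) * (bl A v v + m * SX A v p q m l)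
      - m * bl C z v * SX A v p q m l = bl C z v * bl A v v by ring.
    by rewrite -e -E2; ring.
  rewrite normrM (ger0_norm (ltW mp)); apply: ler_wpM2l; first exact: ltW.
  bnd.
split => //.
apply/eqP; rewrite -subr_eq0 opprD addrA; apply/eqP.
apply: (@small_zero _ _
    (((`|bl C z p| + L * `|bl C z q|) * MA + MC) + `|bl C z q| * (MB + L * MA)) _ m0p) => m mp mle.
have [l [hl [H E2]]] := Hp m mp mle.
have hm : `|m| <= 1.
  by rewrite ger0_norm ?(ltW mp) //; apply: le_trans mle _.
have hSA : `|SX A v p q m l| <= MA by exact: SX_bound.
have hSB : `|SX B v p q m l| <= MB by exact: SX_bound.
have hSC : `|SX C v p q m l| <= MC by exact: SX_bound.
rewrite gv0 add0r in E2.
have E3 : bl C v v + m * SX C v p q m l =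
   (bl C z p + l * bl C z q) * (bl A v v + m * SX A v p q m l).
  apply: (mulfI (lt0r_neq0 mp)); rewrite E2; ring.
have -> : bl C v v - bl C z p * bl A v v - bl C z q * bl B v v =
   m * ((bl C z p + l * bl C z q) * SX A v p q m l - SX C v p q m l
        + bl C z q * (SX B v p q m l - l * SX A v p q m l)).
  have e : bl C v v - bl C z p * bl A v v - bl C z q * bl B v v
     - m * ((bl C z p + l * bl C z q) * SX A v p q m l - SX C v p q m l
        + bl C z q * (SX B v p q m l - l * SX A v p q m l))
     = (bl C v v + m * SX C v p q m l - (bl C z p + l * bl C z q) * (bl A v v + m * SX A v p q m l))
       - bl C z q * (bl B v v + m * SX B v p q m l - l * (bl A v v + m * SX A v p q m l)) by ring.
  by apply/eqP; rewrite -subr_eq0 e E3 H !subrr mulr0 subrr.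
rewrite normrM (ger0_norm (ltW mp)); apply: ler_wpM2l; first exact: ltW.
bnd.
Qed.
End Key2.

Lemma two_good (R : realType) (c a1 : R) : a1 != 0 ->
  exists s1 s2 : R, [/\ s1 != s2, s1 != 0, s2 != 0,
    2 * c + s1 * a1 != 0 & 2 * c + s2 * a1 != 0].
Proof.
move=> a1n.
have [h1|h1] := eqVneq (2 * c + 1 * a1) 0.
  exists 2, 3; split; rewrite ?pnatr_eq0 //.
  - by rewrite eqr_nat.
  - have -> : 2 * c + 2 * a1 = (2 * c + 1 * a1) + a1 by ring.
    by rewrite h1 add0r.
  - have -> : 2 * c + 3 * a1 = (2 * c + 1 * a1) + 2 * a1 by ring.
    by rewrite h1 add0r mulf_neq0 // pnatr_eq0.
have [h2|h2] := eqVneq (2 * c + 2 * a1) 0.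
  exists 1, 3; split; rewrite ?oner_eq0 ?pnatr_eq0 //.
  - by rewrite (eqr_nat R 1 3).
  - have -> : 2 * c + 3 * a1 = (2 * c + 2 * a1) + a1 by ring.
    by rewrite h2 add0r.
exists 1, 2; split; rewrite ?oner_eq0 ?pnatr_eq0 //.
by rewrite (eqr_nat R 1 2).
Qed.

Section Full.
Variable R : realType.
Variable n : nat.
Implicit Types (A B C : 'M[R]_n) (z p q v w : 'cV[R]_n).

Lemma expand2 X v w (s : R) : X^T = X ->
  bl X (v + s *: w) (v + s *: w) = bl X v v + 2 * s * bl X v w + s ^+ 2 * bl X w w.
Proof.
move=> sX; rewrite !(blDl, blDr, blZl, blZr) (bl_sym w v sX); ring.
Qed.

Lemma local_full A B C z p q v1 :
  A^T = A -> B^T = B -> C^T = C ->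
  (forall y, Q A y = 0 -> Q B y = 0 -> Q C y = 0) ->
  bl A z z = 0 -> bl B z z = 0 ->
  bl A z p = 1 -> bl B z p = 0 -> bl A z q = 0 -> bl B z q = 1 ->
  bl A z v1 = 0 -> bl B z v1 = 0 -> bl A v1 v1 != 0 ->
  (forall v, bl A z v = 0 -> bl B z v = 0 -> bl C z v = 0) /\
  (forall v, bl A z v = 0 -> bl B z v = 0 ->
     bl C v v = bl C z p * bl A v v + bl C z q * bl B v v).
Proof.
move=> sA sB sC HQ zA zB pA pB qA qB v1A v1B a1n.
have K := local_key sA sB sC HQ zA zB pA pB qA qB.
have [g1 _] := K _ v1A v1B a1n.
have lin X v (s : R) : bl X z (v + s *: v1) = bl X z v + s * bl X z v1.
  by rewrite blDr blZr.
have QAs v (s : R) : bl A v v = 0 ->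
    bl A (v + s *: v1) (v + s *: v1) = s * (2 * bl A v v1 + s * bl A v1 v1).
  by move=> h; rewrite expand2 // h; ring.
have Tz v (s : R) X : bl X z v = 0 -> bl X z v1 = 0 -> bl X z (v + s *: v1) = 0.
  by move=> h h'; rewrite lin h h'; ring.
have good v (s : R) : bl A z v = 0 -> bl B z v = 0 -> bl A v v = 0 -> s != 0 ->
   2 * bl A v v1 + s * bl A v1 v1 != 0 ->
   bl C z (v + s *: v1) = 0 /\
   bl C (v + s *: v1) (v + s *: v1) = bl C z p * bl A (v + s *: v1) (v + s *: v1)
     + bl C z q * bl B (v + s *: v1) (v + s *: v1).
  move=> vA vB vv sn hs; apply: K; rewrite ?Tz //.
  by rewrite QAs // mulf_neq0.
suff H : forall v, bl A z v = 0 -> bl B z v = 0 -> bl C z v = 0 /\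
     bl C v v = bl C z p * bl A v v + bl C z q * bl B v v.
  by split => v vA vB; have [] := H v vA vB.
move=> v vA vB.
have [vv|vv] := eqVneq (bl A v v) 0; last exact: K.
have [s1 [s2 [s12 s10 s20 h1 h2]]] := two_good (bl A v v1) a1n.
have [e1 f1] := good v s1 vA vB vv s10 h1.
have [e2 f2] := good v s2 vA vB vv s20 h2.
have gv : bl C z v = 0 by move: e1; rewrite lin g1 mulr0 addr0.
split => //.
move: f1 f2; rewrite !expand2 //.
set F := bl C v v - bl C z p * bl A v v - bl C z q * bl B v v.
set Fb := bl C v v1 - bl C z p * bl A v v1 - bl C z q * bl B v v1.
have [_ Fv1] := K _ v1A v1B a1n.
move=> f1 f2.
have E1 : F + 2 * s1 * Fb = 0.
  rewrite /F /Fb; apply/eqP; rewrite -subr_eq0; apply/eqP.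
  transitivity ((bl C v v + 2 * s1 * bl C v v1 + s1 ^+ 2 * bl C v1 v1) -
    (bl C z p * (bl A v v + 2 * s1 * bl A v v1 + s1 ^+ 2 * bl A v1 v1) +
     bl C z q * (bl B v v + 2 * s1 * bl B v v1 + s1 ^+ 2 * bl B v1 v1))
     + s1 ^+ 2 * (bl C z p * bl A v1 v1 + bl C z q * bl B v1 v1 - bl C v1 v1)); first ring.
  by rewrite f1 Fv1 !subrr mulr0 addr0.
have E2 : F + 2 * s2 * Fb = 0.
  rewrite /F /Fb; apply/eqP; rewrite -subr_eq0; apply/eqP.
  transitivity ((bl C v v + 2 * s2 * bl C v v1 + s2 ^+ 2 * bl C v1 v1) -
    (bl C z p * (bl A v v + 2 * s2 * bl A v v1 + s2 ^+ 2 * bl A v1 v1) +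
     bl C z q * (bl B v v + 2 * s2 * bl B v v1 + s2 ^+ 2 * bl B v1 v1))
     + s2 ^+ 2 * (bl C z p * bl A v1 v1 + bl C z q * bl B v1 v1 - bl C v1 v1)); first ring.
  by rewrite f2 Fv1 !subrr mulr0 addr0.
have Fb0 : Fb = 0.
  have : 2 * (s1 - s2) * Fb = 0 by rewrite -[RHS](subrr 0) -{1}E1 -E2; ring.
  by move/eqP; rewrite !mulf_eq0 pnatr_eq0 subr_eq0 (negbTE s12) /= => /eqP.
have F0 : F = 0 by move: E1; rewrite Fb0 mulr0 addr0.
have -> : bl C v v = F + (bl C z p * bl A v v + bl C z q * bl B v v) by rewrite /F; ring.
by rewrite F0 add0r.
Qed.
End Full.

Section Rank.
Variable R : realType.
Variable n : nat.
Implicit Types (M : 'M[R]_n) (a b u v w : 'cV[R]_n).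

Definition dot u w : R := (u^T *m w) 0 0.
Lemma dotDr u v w : dot u (v + w) = dot u v + dot u w.
Proof. by rewrite /dot mulmxDr mxE. Qed.
Lemma dotZr u c w : dot u (c *: w) = c * dot u w.
Proof. by rewrite /dot -scalemxAr mxE. Qed.

Lemma entry_PMP (P M : 'M[R]_n) i j :
  (P *m M *m P^T) i j = bl M (row i P)^T (row j P)^T.
Proof.
rewrite /bl trmxK tr_row -row_mul -row_mul colE mulmxA -colE.
by rewrite !mxE.
Qed.

Lemma rank_T M a b : M^T = M ->
  (forall v, dot a v = 0 -> dot b v = 0 -> bl M v v = 0) -> (\rank M <= 4)%N.
Proof.
move=> sM H.
have H2 : forall v w, dot a v = 0 -> dot b v = 0 -> dot a w = 0 -> dot b w = 0 ->
    bl M v w = 0.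
  move=> v w av bv aw bw.
  have hvw : dot a (v + w) = 0 by rewrite dotDr av aw addr0.
  have hvw' : dot b (v + w) = 0 by rewrite dotDr bv bw addr0.
  have := H _ hvw hvw'; rewrite !(blDl, blDr) (H _ av bv) (H _ aw bw) (bl_sym w v sM).
  by move=> /eqP; rewrite add0r addr0 -mulr2n mulrn_eq0 /= => /eqP.
pose L := row_mx a b.
pose P := kermx L.
have PL : P *m L = 0 by exact: mulmx_ker.
have [Pa Pb] : P *m a = 0 /\ P *m b = 0.
  by move: PL; rewrite mul_mx_row -row_mx0 => /eq_row_mx.
have rowT : forall i, dot a (row i P)^T = 0 /\ dot b (row i P)^T = 0.
  move=> i; rewrite /dot.
  have e : forall c : 'cV[R]_n, (c^T *m (row i P)^T) 0 0 = (P *m c) i 0.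
    by move=> c; rewrite -trmx_mul mxE -row_mul mxE.
  by rewrite !e Pa Pb !mxE.
have PMP : P *m M *m P^T = 0.
  apply/matrixP => i j; rewrite entry_PMP mxE.
  by have [h1 h2] := rowT i; have [h3 h4] := rowT j; apply: H2.
have sub : (P *m M <= kermx P^T)%MS by apply/sub_kermxP.
have r1 := mxrankS sub.
have r2 := mxrank_mul_min P M.
rewrite mxrank_ker mxrank_tr in r1.
have r3 : \rank P = (n - \rank L)%N by rewrite mxrank_ker.
have r4 : (\rank L <= 2)%N by exact: rank_leq_col.
have r5 : (\rank L <= n)%N by exact: rank_leq_row.
lia.
Qed.
End Rank.

Section Point.
Variable R : realType.
Variable n : nat.
Implicit Types (A B C M : 'M[R]_n) (a b u v w z p q : 'cV[R]_n).

Lemma bl_dot A z v : A^T = A -> bl A z v = dot (A *m z) v.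
Proof. by move=> sA; rewrite /bl /dot trmx_mul sA. Qed.

Lemma dotC u w : dot u w = dot w u.
Proof.
rewrite /dot; transitivity ((u^T *m w)^T 0 0); first by rewrite [RHS]mxE.
by rewrite trmx_mul trmxK.
Qed.
Lemma dotDl u v w : dot (u + v) w = dot u w + dot v w.
Proof. by rewrite dotC dotDr !(dotC w). Qed.
Lemma dotZl u c w : dot (c *: u) w = c * dot u w.
Proof. by rewrite dotC dotZr dotC. Qed.

Lemma dot_sum u : dot u u = \sum_i u i 0 ^+ 2.
Proof. by rewrite /dot mxE; apply: eq_bigr => i _; rewrite mxE expr2. Qed.

Lemma dot_eq0 u : dot u u = 0 -> u = 0.
Proof.
rewrite dot_sum => /eqP; rewrite psumr_eq0 => [/allP h|i _]; last exact: sqr_ge0.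
apply/matrixP => i j; rewrite (ord1 j) mxE.
by have := h i (mem_index_enum _); rewrite sqrf_eq0 => /eqP.
Qed.

Lemma dot_ext u w : (forall x, dot u x = dot w x) -> u = w.
Proof.
move=> h; apply/eqP; rewrite -subr_eq0; apply/eqP; apply: dot_eq0.
by rewrite dotDl dotDr dotDr h -scaleN1r dotZl h dotZl; ring.
Qed.

Lemma dual_basis a b : lin_indep2 a b ->
  exists p q, [/\ dot a p = 1, dot b p = 0, dot a q = 0 & dot b q = 1].
Proof.
move=> ind.
pose g11 := dot a a; pose g12 := dot a b; pose g22 := dot b b.
pose D := g11 * g22 - g12 ^+ 2.
have b0 : b != 0.
  apply/eqP => b0; have := ind 0 1; rewrite b0 scaler0 scale0r addr0 => /(_ erefl) [_].
  by move/eqP; rewrite oner_eq0.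
have g22n : g22 != 0 by apply: contra b0 => /eqP /dot_eq0 ->.
have Dn : D != 0.
  apply/eqP => D0.
  have : dot (g22 *: a + (- g12) *: b) (g22 *: a + (- g12) *: b) = g22 * D.
    rewrite !(dotDl, dotDr, dotZl, dotZr) /D /g11 /g12 /g22 (dotC b a); ring.
  rewrite D0 mulr0 => /dot_eq0 /ind [h _].
  by move: g22n; rewrite h eqxx.
exists (D^-1 *: (g22 *: a - g12 *: b)), (D^-1 *: (g11 *: b - g12 *: a)).
rewrite !(dotZr, dotDr) -!scaleNr !dotZr -/g11 -/g22 -/g12 (dotC b a) -/g12.
split; apply: (mulfI Dn); rewrite mulrA mulfV // /D; ring.
Qed.


Lemma finish A B C z p q (a b : R) :
  A^T = A -> B^T = B -> C^T = C ->
  bl A z p = 1 -> bl B z p = 0 -> bl A z q = 0 -> bl B z q = 1 ->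
  a = bl C z p -> b = bl C z q ->
  (forall v, bl A z v = 0 -> bl B z v = 0 -> bl C z v = 0) ->
  (forall v, bl A z v = 0 -> bl B z v = 0 -> bl C v v = a * bl A v v + b * bl B v v) ->
  C *m z = a *: (A *m z) + b *: (B *m z) /\ (\rank (C - a *: A - b *: B)%R <= 4)%N.
Proof.
move=> sA sB sC pA pB qA qB ea eb Hg HQv; split.
  apply: dot_ext => x; rewrite dotDl !dotZl -!bl_dot //.
  pose y := x - bl A z x *: p - bl B z x *: q.
  have yA : bl A z y = 0 by rewrite /y !(blBr, blZr) pA qA; ring.
  have yB : bl B z y = 0 by rewrite /y !(blBr, blZr) pB qB; ring.
  have := Hg _ yA yB; rewrite /y !(blBr, blZr) -ea -eb => h.
  by apply/eqP; rewrite -subr_eq0 -h; apply/eqP; ring.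
apply: (rank_T (a := A *m z) (b := B *m z)).
  by rewrite !linearB !linearZ /= sA sB sC.
move=> v h1 h2; rewrite -!bl_dot // in h1 h2.
by rewrite !(blBm, blZm) HQv //; ring.
Qed.

Lemma point_lemma A B C z :
  A^T = A -> B^T = B -> C^T = C ->
  (forall y, Q A y = 0 -> Q B y = 0 -> Q C y = 0) ->
  maxrank_ge A B 17 -> Nset A B z ->
  exists a b : R, C *m z = a *: (A *m z) + b *: (B *m z) /\
     (\rank (C - a *: A - b *: B)%R <= 4)%N.
Proof.
move=> sA sB sC HQ [ra [rb rk]] [zA [zB ind]].
rewrite QE in zA zB.
have [p [q [pA pB qA qB]]] := dual_basis ind.
rewrite -!bl_dot // in pA pB qA qB.
have [[v1 [v1A v1B a1n]]|h1] := pselect (exists v1, [/\ bl A z v1 = 0, bl B z v1 = 0 &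
      bl A v1 v1 != 0]).
  have [Hg HQv] := local_full sA sB sC HQ zA zB pA pB qA qB v1A v1B a1n.
  by exists (bl C z p), (bl C z q); apply: (finish sA sB sC pA pB qA qB).
have [[v1 [v1A v1B a1n]]|h2] := pselect (exists v1, [/\ bl A z v1 = 0, bl B z v1 = 0 &
      bl B v1 v1 != 0]).
  have HQ' : forall y, Q B y = 0 -> Q A y = 0 -> Q C y = 0 by move=> y h h'; apply: HQ.
  have [Hg HQv] := local_full sB sA sC HQ' zB zA qB qA pB pA v1B v1A a1n.
  exists (bl C z p), (bl C z q); apply: (finish sA sB sC pA pB qA qB) => //.
  - by move=> v h h'; apply: Hg.
  - by move=> v h h'; rewrite HQv // addrC.
exfalso.
have rA : (\rank A <= 4)%N.
  apply: (rank_T (a := A *m z) (b := B *m z)) => // v h h'; rewrite -!bl_dot // in h h'.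
  apply/eqP; apply: contraT => hn; exfalso; apply: h1; exists v; split => //.
have rB : (\rank B <= 4)%N.
  apply: (rank_T (a := A *m z) (b := B *m z)) => // v h h'; rewrite -!bl_dot // in h h'.
  apply/eqP; apply: contraT => hn; exfalso; apply: h2; exists v; split => //.
have r1 := (mxrank_adds_leqif (ra *: A) (rb *: B)).1.
have r2 := mxrank_scale ra A; have r3 := mxrank_scale rb B.
by have := leq_trans rk (leq_trans r1 (leq_add (leq_trans r2 rA) (leq_trans r3 rB))).
Qed.
End Point.

Lemma closed_ker (R : realType) m n (M : 'M[R]_(m, n)) : closed [set z : 'cV[R]_n | M *m z = 0].
Proof.
move=> z cz; apply/matrixP => i k; rewrite (ord1 k) [RHS]mxE.
set c := (M *m z) i 0.
pose K := \sum_j `|M i j|.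
have key : forall e : R, 0 < e -> `|c| <= e * K.
  move=> e e0.
  have [z' [Gz' bz']] := cz _ (nbhsx_ballx z e e0).
  have -> : c = (M *m (z - z')) i 0.
    by rewrite mulmxBr Gz' subr0.
  rewrite mxE /K mulr_sumr; apply: le_trans (ler_norm_sum _ _ _) _.
  apply: ler_sum => j _; rewrite normrM mulrC; apply: ler_wpM2r => //.
  have := bz'; rewrite /ball /= => -[_ /(_ j 0)]; rewrite /ball /= !mxE.
  by move/ltW.
by apply: (@small_zero _ c K 1 ltr01) => e e0 _; apply: key.
Qed.


Section Global.
Variable R : realType.
Variable n : nat.
Implicit Types (A B C D E M : 'M[R]_n) (z v u : 'cV[R]_n).

Lemma span_image M E (S : set 'cV[R]_n) (g : 'cV[R]_n -> 'cV[R]_n) :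
  spans_all S -> (forall z, S z -> M *m z = E *m g z) ->
  forall v, exists u, M *m v = E *m u.
Proof.
move=> Hs Hg v; have [m [c [w [Sw ->]]]] := Hs v.
exists (\sum_(i < m) c i *: g (w i)); rewrite !mulmx_sumr; apply: eq_bigr => i _.
by rewrite -!scalemxAr Hg.
Qed.


Lemma rank_opp M : \rank (- M)%R = \rank M.
Proof.
by rewrite -scaleN1r mxrank_scale_nz // oppr_eq0 oner_eq0.
Qed.

Lemma rank_sub8 M N : (\rank M <= 4)%N -> (\rank N <= 4)%N -> (\rank (M - N)%R <= 8)%N.
Proof.
move=> hM hN; have := mxrank_add M (- N); rewrite rank_opp => h.
by apply: leq_trans h _; apply: (leq_add hM hN).
Qed.
Lemma colspace D E : D^T = D -> E^T = E -> (forall v, exists u, D *m v = E *m u) ->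
  exists X, D = X *m E.
Proof.
move=> sD sE H.
have : (D <= E)%MS.
  apply/row_subP => j.
  have [u hu] := H (delta_mx j 0).
  have -> : row j D = (D *m delta_mx j 0)^T by rewrite -colE tr_col sD.
  by rewrite hu trmx_mul sE submxMl.
by move/submxP.
Qed.
Lemma rank_contra A B (d11 d12 d21 d22 : R) : d11 * d22 - d12 * d21 != 0 ->
  (\rank (d11 *: A + d12 *: B)%R <= 8)%N -> (\rank (d21 *: A + d22 *: B)%R <= 8)%N ->
  maxrank_ge A B 17 -> False.
Proof.
move=> dn r1 r2 [ra [rb rk]].
move: r1 r2.
set E1 := (d11 *: A + d12 *: B)%R; set E2 := (d21 *: A + d22 *: B)%R => r1 r2.
set dt := d11 * d22 - d12 * d21.
have eA : A = dt^-1 *: (d22 *: E1 + (- d12) *: E2)%R.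
  apply/matrixP => i j; rewrite !mxE /dt; field; exact: dn.
have eB : B = dt^-1 *: (d11 *: E2 + (- d21) *: E1)%R.
  apply/matrixP => i j; rewrite !mxE /dt; field; exact: dn.
have s1 : (E1 <= E1 + E2)%MS by exact: addsmxSl.
have s2 : (E2 <= E1 + E2)%MS by exact: addsmxSr.
have sA : (A <= E1 + E2)%MS.
  by rewrite eA; apply: scalemx_sub; apply: addmx_sub; apply: scalemx_sub.
have sB : (B <= E1 + E2)%MS.
  by rewrite eB; apply: scalemx_sub; apply: addmx_sub; apply: scalemx_sub.
have sAB : (ra *: A + rb *: B <= E1 + E2)%MS.
  by rewrite addsmx_sub; apply/andP; split; apply: scalemx_sub.
have h2 := mxrankS sAB.
have h1 := (mxrank_adds_leqif E1 E2).1.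
have := leq_trans rk (leq_trans h2 (leq_trans h1 (leq_add r1 r2))).
by [].
Qed.
Lemma eigen_root (X : 'M[R]_n) (y : 'cV[R]_n) (t : R) :
  X *m y = t *: y -> y != 0 -> root (char_poly X^T) t.
Proof.
move=> h yn; rewrite -eigenvalue_root_char; apply/eigenvalueP; exists y^T.
  by rewrite -trmx_mul h linearZ.
by rewrite trmx_eq0.
Qed.
End Global.

Lemma big_setU_mem (T : Type) (I : eqType) (s : seq I) (S : I -> set T) y :
  (\big[setU/set0]_(i <- s) S i) y <-> exists2 i, i \in s & S i y.
Proof.
elim: s => [|i s ih]; first by rewrite big_nil; split => // -[].
rewrite big_cons; split.
  case=> [h|/ih [j js hj]]; first by exists i; rewrite ?mem_head.
  by exists j; rewrite // in_cons js orbT.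
case=> j; rewrite in_cons => /orP[/eqP -> h|js hj]; first by left.
by right; apply/ih; exists j.
Qed.


Theorem theorem3p12 (R : realType) (n : nat) (A B C : 'M[R]_n) :
  symmetric_mx A -> symmetric_mx B -> symmetric_mx C ->
  lin_indep2 A B ->
  non_dissipative A B ->
  maxrank_ge A B 17 ->
  (forall z : 'cV[R]_n, Q A z = 0 -> Q B z = 0 -> Q C z = 0) ->
  (exists x : 'cV[R]_n, Nset A B x /\ spans_all (connected_component (Nset A B) x)) ->
  exists a b : R, C = a *: A + b *: B.
Proof.
move=> sA sB sC _ _ mr HQ [x [Nx Hsp]].
rewrite /symmetric_mx in sA sB sC.
set K := connected_component (Nset A B) x in Hsp.
have KN : K `<=` Nset A B by exact: connected_component_sub.
have Kx : K x by exact: connected_component_refl.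
have Kc : connected K by exact: component_connected.
have [f Hf] : {f : 'cV[R]_n -> R * R & forall z, Nset A B z ->
    C *m z = (f z).1 *: (A *m z) + (f z).2 *: (B *m z) /\
    (\rank (C - (f z).1 *: A - (f z).2 *: B)%R <= 4)%N}.
  apply: (@choice _ _ (fun z (ab : R * R) => Nset A B z ->
    C *m z = ab.1 *: (A *m z) + ab.2 *: (B *m z) /\
    (\rank (C - ab.1 *: A - ab.2 *: B)%R <= 4)%N)) => z.
  have [h|h] := pselect (Nset A B z).
    by have [a [b hab]] := point_lemma sA sB sC HQ mr h; exists (a, b).
  by exists (0, 0).
pose a0 := (f x).1; pose b0 := (f x).2.
pose D0 := (C - a0 *: A - b0 *: B)%R.
pose Dz z := (C - (f z).1 *: A - (f z).2 *: B)%R.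
have Dzz : forall z, K z -> Dz z *m z = 0.
  move=> z Kz; have [h _] := Hf z (KN _ Kz).
  rewrite /Dz !mulmxBl -!scalemxAl h; apply/matrixP => i j; rewrite !mxE; ring.
have D0x : D0 *m x = 0 by exact: (Dzz x Kx).
have [allK|] := pselect (forall z, K z -> D0 *m z = 0).
  have h := span_image (E := 0) (g := fun=> 0) Hsp (fun z Kz => etrans (allK z Kz) (esym (mul0mx _ _))).
  exists a0, b0.
  have D00 : D0 = 0.
    apply/matrixP => i j; have [u hu] := h (delta_mx j 0).
    move: hu; rewrite mul0mx -colE => /matrixP /(_ i 0).
    by rewrite !mxE.
  by apply/eqP; rewrite -subr_eq0 opprD addrA -/D0 D00.
move=> /existsNP [z1] /not_implyP [Kz1 D0z1].
pose d z := ((f z).1 - a0, (f z).2 - b0).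
have DzD0 : forall z, Dz z = (D0 - ((d z).1 *: A + (d z).2 *: B))%R.
  by move=> z; apply/matrixP => i j; rewrite !mxE /=; ring.
pose e1 := (d z1).1; pose e2 := (d z1).2.
have nn0 : e1 ^+ 2 + e2 ^+ 2 != 0.
  apply/eqP => h; move/eqP: h; rewrite paddr_eq0 ?sqr_ge0 // !sqrf_eq0 => /andP[/eqP h1 /eqP h2].
  apply: D0z1; have := Dzz z1 Kz1; rewrite DzD0 -/e1 -/e2 h1 h2 !scale0r addr0 subr0.
  by [].
have rD0 : (\rank D0 <= 4)%N by have [_] := Hf x Nx.
have rDz : forall z, K z -> (\rank (Dz z) <= 4)%N by move=> z Kz; have [_] := Hf z (KN _ Kz).
pose cr z := (d z).1 * e2 - (d z).2 * e1.
have [[z2 [Kz2 crn]]|crall] := pselect (exists z2, K z2 /\ cr z2 != 0).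
  exfalso; apply: (@rank_contra _ _ A B e1 e2 (d z2).1 (d z2).2 _ _ _ mr).
  - by move: crn; rewrite /cr; apply: contra => /eqP h; apply/eqP; rewrite -oppr0 -h; ring.
  - have -> : (e1 *: A + e2 *: B)%R = (D0 - Dz z1)%R.
      by rewrite DzD0 /e1 /e2; apply/matrixP => i j; rewrite !mxE; ring.
    by apply: rank_sub8 => //; apply: rDz.
  - have -> : ((d z2).1 *: A + (d z2).2 *: B)%R = (D0 - Dz z2)%R.
      by rewrite DzD0; apply/matrixP => i j; rewrite !mxE; ring.
    by apply: rank_sub8 => //; apply: rDz.
have cr0 : forall z, K z -> cr z = 0.
  move=> z Kz; apply/eqP; apply: contraT => h; exfalso; apply: crall; exists z; split => //.
pose E := (e1 *: A + e2 *: B)%R.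
pose nn := e1 ^+ 2 + e2 ^+ 2.
pose t z := ((d z).1 * e1 + (d z).2 * e2) / nn.
have dt : forall z, K z -> (d z).1 = t z * e1 /\ (d z).2 = t z * e2.
  move=> z Kz; have h := cr0 z Kz.
  have e1' : (d z).1 - t z * e1 = e2 * cr z / nn by rewrite /t /cr /nn; field.
  have e2' : (d z).2 - t z * e2 = - e1 * cr z / nn by rewrite /t /cr /nn; field.
  rewrite h mulr0 mul0r in e1'; rewrite h mulr0 mul0r in e2'.
  by split; apply/eqP; rewrite -subr_eq0; apply/eqP.
have Dt : forall z, K z -> D0 *m z = t z *: (E *m z).
  move=> z Kz; have := Dzz z Kz; rewrite DzD0; have [h1 h2] := dt z Kz.
  rewrite h1 h2 mulmxBl => /eqP; rewrite subr_eq0 => /eqP ->.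
  by rewrite /E !mulmxDl -!scalemxAl scalerDr !scalerA.
have sD0 : D0^T = D0 by rewrite /D0 !linearB !linearZ /= sA sB sC.
have sE : E^T = E by rewrite /E !linearD !linearZ /= sA sB.
have [X hX] := colspace sD0 sE (span_image (g := fun z => t z *: z) Hsp
   (fun z Kz => etrans (Dt z Kz) (scalemxAr _ _ _))).
have Ezn : forall z, K z -> E *m z != 0.
  move=> z Kz; have [_ [_ ind]] := KN _ Kz; apply/eqP => h.
  have [h1 h2] : e1 = 0 /\ e2 = 0 by apply: ind; rewrite -h /E mulmxDl -!scalemxAl.
  by move: nn0; rewrite h1 h2 expr0n /= addr0 eqxx.
pose P := char_poly X^T.
have rootK : forall z, K z -> root P (t z).
  move=> z Kz; apply: eigen_root (Ezn z Kz).
  by rewrite mulmxA -hX Dt.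
have Pn : P != 0 by apply: monic_neq0; exact: char_poly_monic.
pose rs := [seq s <- polyrcf.rootsR P | s != 0].
have memrs : forall s, root P s -> s != 0 -> s \in rs.
  move=> s rs0 sn; rewrite mem_filter sn /= -(roots_on_rootsR Pn) rs0 andbT.
  by rewrite in_itv.
pose F := \big[setU/set0]_(s <- rs) [set y : 'cV[R]_n | (D0 - s *: E) *m y = 0].
pose G := [set y : 'cV[R]_n | D0 *m y = 0].
have Fcl : closed F by apply: closed_bigsetU => s _; exact: closed_ker.
have Gcl : closed G by exact: closed_ker.
have KG : K `&` G = K.
  apply: Kc.
  - by exists x; split.
  - exists (~` F); first by rewrite openC.
    apply/seteqP; split => y [Ky h]; split => //.
      move=> /big_setU_mem [s]; rewrite mem_filter => /andP[sn _].
      rewrite /= mulmxBl -scalemxAl h sub0r => /eqP; rewrite oppr_eq0 scaler_eq0 (negbTE sn) /=.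
      by apply/negP; exact: Ezn.
    have [t0|tn] := eqVneq (t y) 0.
      by rewrite /G /= Dt // t0 scale0r.
    exfalso; apply: h; apply/big_setU_mem; exists (t y); first by apply: memrs => //; exact: rootK.
    by rewrite /= mulmxBl -scalemxAl Dt // subrr.
  - by exists G.
have : (K `&` G) z1 by rewrite KG.
by move=> [_ /= h]; exfalso; exact: D0z1 h.
Qed.
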